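(* Let $G$ be a connected graph of order $n$ with minimum degree $\delta=\delta(G)\geq 1+\sqrt{3n+4}$. Then $$prc(G)-rc(G)\geq \delta-\Big(\frac{3n}{\delta+1}+3\Big).$$
   Context: A path in an edge-coloured graph is a rainbow path if its edges receive pairwise distinct colours. The rainbow connection number $rc(G)$ of a connected graph $G$ is the minimum number of colours in an edge-colouring such that every two distinct vertices are joined by a rainbow path. The proper rainbow connection number $prc(G)$ is the minimum number of colours in a proper edge-colouring (adjacent edges get distinct colours) such that every two distinct vertices are joined by a rainbow path. *)

(* Defs.v *)
From mathcomp Require Import all_boot all_order all_algebra.
Set Implicit Arguments. Unset Strict Implicit. Unset Printing Implicit Defensive.

Definition simple_graph (T : finType) (e : rel T) : Prop :=
  symmetric e /\ irreflexive e.

Definition connected_graph (T : finType) (e : rel T) : Prop :=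
  forall x y : T, connect e x y.

Definition deg (T : finType) (e : rel T) (x : T) : nat := #|[set y | e x y]|.

Definition is_min_degree (T : finType) (e : rel T) (delta : nat) : Prop :=
  (forall x, delta <= deg e x) /\ (exists x, deg e x = delta).

Definition edge_colouring (T : finType) (e : rel T) (k : nat) (c : T -> T -> nat) : Prop :=
  forall x y, e x y -> c x y = c y x /\ c x y < k.

Definition proper_colouring (T : finType) (e : rel T) (c : T -> T -> nat) : Prop :=
  forall x y z, e x y -> e x z -> y != z -> c x y != c x z.

Definition rainbow_path (T : finType) (e : rel T) (c : T -> T -> nat)
  (x y : T) (p : seq T) : bool :=
  [&& path e x p, uniq (x :: p), last x p == y & uniq (pairmap c x p)].

Definition rainbow_connected (T : finType) (e : rel T) (c : T -> T -> nat) : Prop :=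
  forall x y, x != y -> exists p, rainbow_path e c x y p.

Definition rc_colourable (T : finType) (e : rel T) (k : nat) : Prop :=
  exists c, edge_colouring e k c /\ rainbow_connected e c.

Definition prc_colourable (T : finType) (e : rel T) (k : nat) : Prop :=
  exists c, [/\ edge_colouring e k c, proper_colouring e c & rainbow_connected e c].

Definition is_minimum (P : nat -> Prop) (k : nat) : Prop :=
  P k /\ forall k', P k' -> k <= k'.

Definition is_rc (T : finType) (e : rel T) (r : nat) : Prop :=
  is_minimum (rc_colourable e) r.
Definition is_prc (T : finType) (e : rel T) (r : nat) : Prop :=
  is_minimum (prc_colourable e) r.

(* Main.v *)
Require Import Defs.
From mathcomp Require Import all_boot all_order all_algebra zify ring lra.
Import Order.TTheory GRing.Theory Num.Theory.
Set Implicit Arguments. Unset Strict Implicit. Unset Printing Implicit Defensive.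

Lemma uniq_map_inj_in (A B : eqType) (f : A -> B) (s : seq A) :
  uniq (map f s) -> {in s &, injective f}.
Proof.
elim: s => [|x s IH] //= /andP[fx /IH inj] a b.
rewrite !inE => /predU1P[->|aS] /predU1P[->|bs] //.
- by move=> E; move: fx; rewrite E map_f.
- by move=> E; move: fx; rewrite -E map_f.
- exact: inj.
Qed.

Lemma uniq_map_sub (A B : eqType) (f : A -> B) (s t : seq A) :
  uniq (map f s) -> {subset t <= s} -> uniq t -> uniq (map f t).
Proof.
move=> us ts ut; rewrite map_inj_in_uniq // => a b aT bt.
exact: (uniq_map_inj_in us) (ts _ aT) (ts _ bt).
Qed.

Lemma path_pairs (T : Type) (r : rel T) x p :
  path r x p = all (fun pr => r pr.1 pr.2) (pairmap pair x p).
Proof. by elim: p x => //= y p IH x; rewrite IH. Qed.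

Lemma pairmap_pairs (T A : Type) (f : T -> T -> A) x p :
  pairmap f x p = map (fun pr => f pr.1 pr.2) (pairmap pair x p).
Proof. by elim: p x => //= y p IH x; rewrite IH. Qed.

Lemma pairs_fst (T : eqType) (x : T) p (pr : T * T) :
  pr \in pairmap pair x p -> pr.1 \in x :: p.
Proof.
elim: p x => //= y p IH x; rewrite inE => /predU1P[->|/IH]; first by rewrite /= eqxx.
by move=> ->; rewrite orbT.
Qed.

Lemma uniq_pairs (T : eqType) (x : T) (p : seq T) : uniq (x :: p) -> uniq (pairmap pair x p).
Proof.
elim: p x => //= y p IH x /andP[]; rewrite inE negb_or => /andP[xy xp] /andP[yp up].
rewrite IH ?andbT /= ?yp //; apply/negP => /pairs_fst /=.
by rewrite inE (negbTE xy) (negbTE xp).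
Qed.



Lemma walk_to_path (T : finType) (e : rel T) (c : T -> T -> nat) x y p :
  path e x p -> last x p = y -> x != y -> uniq (pairmap c x p) ->
  exists q, rainbow_path e c x y q /\ {subset q <= p}.
Proof.
move=> pe lp xy uc.
pose s := pairmap pair x p.
pose e' := fun a b => (a, b) \in s.
have pe' : path e' x p.
  rewrite path_pairs; apply/allP => pr prs; by case: pr prs.
move: lp; case: (shortenP pe') => q pq uq sub lp.
exists q; split=> //; rewrite /rainbow_path uq lp eqxx /=.
have qs : {subset pairmap pair x q <= s}.
  by move: pq; rewrite path_pairs => /allP H pr /H; case: pr.
apply/andP; split.
  rewrite path_pairs; apply/allP => pr /qs prs.
  by move: pe; rewrite path_pairs => /allP /(_ _ prs).
rewrite pairmap_pairs; apply: (uniq_map_sub (s := s)) => //.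
  by rewrite -pairmap_pairs.
exact: uniq_pairs.
Qed.

Lemma last_rev' (T : Type) (x : T) s : last x (rev s) = head x s.
Proof. by case: s => //= a s; rewrite rev_cons last_rcons. Qed.

Lemma rev_walk_pairmap (T : Type) (c : T -> T -> nat) (x : T) p :
  (forall a b, c a b = c b a) ->
  pairmap c (last x p) (rev (belast x p)) = rev (pairmap c x p).
Proof.
move=> cs; elim: p x => //= y p IH x.
rewrite rev_cons -cats1 pairmap_cat IH rev_cons -cats1 last_rev' /=.
by case: p {IH} => [|z p] /=; rewrite (cs y x).
Qed.

Lemma rev_walk_path (T : Type) (e : rel T) (x : T) p :
  symmetric e -> path e x p -> path e (last x p) (rev (belast x p)).
Proof.
move=> es pe; rewrite rev_path; rewrite (eq_path (e' := e)) //.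
Qed.

Lemma rev_walk_last (T : Type) (x : T) p :
  last (last x p) (rev (belast x p)) = x.
Proof. by rewrite last_rev'; case: p. Qed.

Section Main.
Variables (T : finType) (e : rel T).
Hypothesis esym : symmetric e.
Hypothesis eirr : irreflexive e.

Definition Dconn (D : {set T}) (c : T -> T -> nat) (k : nat) :=
  [/\ forall x y, c x y = c y x,
      forall x y, x \in D -> y \in D -> e x y -> c x y < k &
      forall x y, x \in D -> y \in D -> x != y ->
        exists p, rainbow_path e c x y p /\ all (fun z => z \in D) p].

Lemma pairmap_agree (D : {set T}) (c c' : T -> T -> nat) x p :
  (forall a b, a \in D -> b \in D -> c' a b = c a b) ->
  x \in D -> all (fun z => z \in D) p -> pairmap c' x p = pairmap c x p.
Proof.
move=> ag; elim: p x => //= y p IH x xD /andP[yD pD].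
by rewrite ag // IH.
Qed.

Lemma pairmap_bound (D : {set T}) (c : T -> T -> nat) k x p :
  (forall x y, x \in D -> y \in D -> e x y -> c x y < k) ->
  x \in D -> all (fun z => z \in D) p -> path e x p ->
  all (fun i => i < k) (pairmap c x p).
Proof.
move=> bd; elim: p x => //= y p IH x xD /andP[yD pD] /andP[exy pp].
by rewrite bd //= IH.
Qed.

Lemma add1 (D : {set T}) c k v p :
  Dconn D c k -> v \notin D -> p \in D -> e v p ->
  exists c', Dconn (v |: D) c' k.+1.
Proof.
move=> [cs cb cc] vD pD evp.
pose c' := fun x y => if x == v then (if y == p then k else 0)
  else if y == v then (if x == p then k else 0) else c x y.
have vp : v != p by apply: contraNneq vD => ->.
have ag : forall a b, a \in D -> b \in D -> c' a b = c a b.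
  move=> a b aD bD; rewrite /c'.
  have av : (a == v) = false by apply/negbTE; apply: contraNneq vD => <-.
  have bv : (b == v) = false by apply/negbTE; apply: contraNneq vD => <-.
  by rewrite av bv.
exists c'; split.
- move=> x y; rewrite /c'.
  case hx: (x == v); case hy: (y == v) => //.
  by rewrite (eqP hx) (eqP hy).
- move=> x y; rewrite !inE => /predU1P[->|xD] /predU1P[->|yD] exy.
  + by rewrite eirr in exy.
  + by rewrite /c' eqxx; case: ifP.
  + rewrite /c' eqxx; case: ifP => [/eqP xv|_]; last by case: ifP.
    by move: xD; rewrite xv (negbTE vD).
  + by rewrite ag // ltnS ltnW // cb.
have pathD : forall x y, x \in D -> y \in D ->
    exists q, [/\ path e x q, last x q = y, all (fun z => z \in D) q &
      all (fun i => i < k) (pairmap c' x q) /\ uniq (pairmap c' x q)].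
  move=> x y xD yD; case: (x =P y) => [<-|/eqP xy].
    by exists [::].
  have [q [/and4P [pq uq lq uc] qD]] := cc x y xD yD xy.
  exists q; rewrite (pairmap_agree ag) // uc (eqP lq) qD pq.
  by split=> //; split=> //; apply: (pairmap_bound cb).
move=> x y; rewrite !inE => /predU1P[->|xD] /predU1P[->|yD] xy.
- by rewrite eqxx in xy.
- have [q [pq lq qD [qb qu]]] := pathD p y pD yD.
  have u1 : uniq (pairmap c' v (p :: q)).
    rewrite /= {1}/c' eqxx eqxx qu andbT; apply/negP => /(allP qb).
    by rewrite ltnn.
  have p1 : path e v (p :: q) by rewrite /= evp.
  have [r [rp rs]] := walk_to_path p1 lq xy u1.
  exists r; split=> //; apply/allP => z /rs; rewrite inE => /predU1P[->|zq].
    by rewrite !inE pD orbT.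
  by rewrite !inE (allP qD) ?orbT.
- have [q [pq lq qD [qb qu]]] := pathD x p xD pD.
  have u1 : uniq (pairmap c' x (rcons q v)).
    rewrite -cats1 pairmap_cat lq /= cats1 rcons_uniq qu andbT.
    have -> : c' p v = k.
      by rewrite /c' eq_sym (negbTE vp) !eqxx.
    by apply/negP => /(allP qb); rewrite ltnn.
  have p1 : path e x (rcons q v) by rewrite rcons_path pq lq esym.
  have l1 : last x (rcons q v) = v by rewrite last_rcons.
  have [r [rp rs]] := walk_to_path p1 l1 xy u1.
  exists r; split=> //; apply/allP => z /rs; rewrite mem_rcons inE => /predU1P[->|zq].
    by rewrite !inE eqxx.
  by rewrite !inE (allP qD) ?orbT.
- have [q [rq qD]] := cc x y xD yD xy.
  exists q; split; last by apply/allP => z /(allP qD); rewrite !inE => ->; rewrite orbT.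
  move: rq => /and4P[pq uqq lq uc]; apply/and4P; split=> //.
  by rewrite (pairmap_agree ag).
Qed.

End Main.

Section Constr.
Variables (T : finType) (e : rel T).
Hypothesis esym : symmetric e.
Hypothesis eirr : irreflexive e.
Variable delta : nat.
Hypothesis degd : forall x, delta <= deg e x.
Hypothesis d2 : 2 <= delta.
Hypothesis conn : connected_graph e.

Definition nb (A : {set T}) := [set y | [exists a in A, e y a]].
Definition N1c (A : {set T}) := A :|: nb A.
Definition N2c (A : {set T}) := N1c A :|: nb (N1c A).
Definition N1 (D : {set T}) := nb D :\: D.
Definition d0 (D : {set T}) x := odflt x [pick d in D | e x d].
Definition lonely (D : {set T}) x :=
  [&& x \in N1 D, [forall d in D, e x d ==> (d == d0 D x)] &
      ~~ [exists y in N1 D, e x y]].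

Lemma nbP (A : {set T}) y : reflect (exists2 a, a \in A & e y a) (y \in nb A).
Proof. rewrite inE; exact: (iffP exists_inP). Qed.

Lemma d0P (D : {set T}) x : x \in nb D -> d0 D x \in D /\ e x (d0 D x).
Proof.
move=> /nbP [a aD exa]; rewrite /d0; case: pickP => [d /andP[]|] //=.
by move=> /(_ a); rewrite aD exa.
Qed.

Lemma N1c_mono (A B : {set T}) : A \subset B -> N1c A \subset N1c B.
Proof.
move=> AB; apply/subsetP => y; rewrite !inE => /orP[yA|/exists_inP[a aA eya]].
  by rewrite (subsetP AB) .
apply/orP; right; apply/exists_inP; exists a => //; exact: (subsetP AB).
Qed.

Definition good (D : {set T}) c (P : {set T}) :=
  [/\ Dconn e D c #|D|.-1, D != set0, P \subset N1c D &
      delta.+1 * (#|D| + 2) <= 3 * #|P|].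

Definition Fin (D : {set T}) :=
  (forall v, v \in N2c D) /\
  (forall x, x \in N1 D -> (forall d, d \in D -> e x d -> d = d0 D x) ->
     exists2 y, y \in N1 D & e x y).

Lemma add1' (D : {set T}) c v p :
  Dconn e D c #|D|.-1 -> D != set0 -> v \notin D -> p \in D -> e v p ->
  exists c', Dconn e (v |: D) c' #|v |: D|.-1.
Proof.
move=> H D0 vD pD evp; have [c' Hc'] := add1 esym eirr H vD pD evp.
exists c'; rewrite cardsU1 vD /=.
suff -> : #|D| = #|D|.-1.+1 by [].
by rewrite prednK // card_gt0.
Qed.

Lemma crossing (A : {set T}) x p :
  x \in A -> path e x p -> last x p \notin A ->
  exists z y, [/\ z \in A, y \notin A & e z y].
Proof.
elim: p x => [|y p IH] x /=.
  by move=> xA _ /negP.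
move=> xA /andP[exy pp] ly; case yA: (y \in A); first exact: (IH y).
by exists x, y; split=> //; rewrite yA.
Qed.

Lemma cardU_disj (A B : {set T}) : (forall w, w \in A -> w \in B -> False) ->
  #|A :|: B| = #|A| + #|B|.
Proof.
move=> H; rewrite cardsU (_ : A :&: B = set0) ?cards0 ?subn0 //.
apply/setP => w; rewrite !inE; apply/negP => /andP[wa wb]; exact: H wa wb.
Qed.

Lemma stepA D c P v : good D c P -> v \notin N2c D ->
  exists D' c' P', good D' c' P' /\ #|D| < #|D'|.
Proof.
move=> [Hc D0 PD Hineq] vN.
have [d dD] : exists d, d \in D by apply/set0Pn.
have dN : d \in N2c D by rewrite !inE dD.
have /connectP [p pp lp] := conn d v.
have lN : last d p \notin N2c D by rewrite -lp.
have [z [y [zN yN ezy]]] := crossing dN pp lN.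
have zN1 : z \notin N1c D.
  apply: contra yN => zN1; rewrite inE; apply/orP; right.
  by apply/nbP; exists z => //; rewrite esym.
have [c1 c1N ezc1] : exists2 c1, c1 \in N1c D & e z c1.
  by move: zN; rewrite inE (negbTE zN1) /= => /nbP.
have c1D : c1 \notin D.
  apply: contra zN1 => c1D; rewrite inE; apply/orP; right; apply/nbP.
  by exists c1.
have [dd ddD ec1d] : exists2 dd, dd \in D & e c1 dd.
  by move: c1N; rewrite inE (negbTE c1D) /= => /nbP.
have N12 : forall w, w \in N1c D -> w \in N2c D.
  by move=> w wN; rewrite /N2c in_setU wN.
have [ca Ha] := add1' Hc D0 c1D ddD ec1d.
have D10 : c1 |: D != set0 by apply/set0Pn; exists c1; rewrite !inE eqxx.
have zD1 : z \notin c1 |: D.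
  rewrite !inE negb_or; apply/andP; split.
    by apply: contraTneq ezc1 => ->; rewrite eirr.
  by apply: contra zN1; rewrite inE => ->.
have c1D1 : c1 \in c1 |: D by rewrite !inE eqxx.
have [cb Hb] := add1' Ha D10 zD1 c1D1 ezc1.
have D20 : z |: (c1 |: D) != set0 by apply/set0Pn; exists z; rewrite !inE eqxx.
have yD2 : y \notin z |: (c1 |: D).
  rewrite !inE !negb_or; apply/and3P; split.
  - by apply: contraTneq ezy => ->; rewrite eirr.
  - by apply: contra yN => /eqP ->; apply: N12.
  - by apply: contra yN => yD; apply: N12; rewrite inE yD.
have eyz : e y z by rewrite esym.
have zD2 : z \in z |: (c1 |: D) by rewrite !inE eqxx.
have [cc Hcc] := add1' Hb D20 yD2 zD2 eyz.
pose Q := y |: [set w | e y w].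
have cardQ : delta.+1 <= #|Q|.
  rewrite cardsU1 inE eirr /= add1n ltnS; exact: degd.
have disj : forall w, w \in P -> w \in Q -> False.
  move=> w /(subsetP PD) wN; rewrite !inE => /predU1P[wy|eyw].
    by move: yN; rewrite -wy N12.
  by move: yN; rewrite /N2c in_setU negb_or => /andP[_ /negP]; apply;
    apply/nbP; exists w.
have cardD' : #|y |: (z |: (c1 |: D))| = #|D| + 3.
  rewrite cardsU1 yD2 cardsU1 zD1 cardsU1 c1D /=.
  by rewrite !add1n addn3.
set D' := y |: (z |: (c1 |: D)).
exists D', cc, (P :|: Q); split; last by rewrite cardD' -addn1 leq_add2l.
split=> //.
- by apply/set0Pn; exists y; rewrite !inE eqxx.
- rewrite subUset; apply/andP; split.
    apply: subset_trans PD _; apply: N1c_mono.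
    by apply/subsetP => w wD; rewrite !inE wD !orbT.
  apply/subsetP => w; rewrite !inE => /predU1P[->|eyw]; first by rewrite eqxx.
  apply/orP; right; apply/existsP; exists y; rewrite !inE eqxx /= esym; done.
- rewrite cardU_disj // cardD'; clear -Hineq cardQ; nia.
Qed.

Lemma stepB D c P x : good D c P -> lonely D x ->
  exists D' c' P', good D' c' P' /\ #|D| < #|D'|.
Proof.
move=> [Hc D0 PD Hineq] /and3P[xN1 /forall_inP uniqd /exists_inPn noN1].
move: (xN1); rewrite inE => /andP[xD xnb].
have [d0D exd0] := d0P xnb.
have [cc Hcc] := add1' Hc D0 xD d0D exd0.
pose Q := [set w | e x w & w \notin N1c D].
have cardQ : delta <= #|Q|.+1.
  apply: leq_trans (degd x) _; rewrite /deg.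
  have sub : [set w | e x w] \subset d0 D x |: Q.
    apply/subsetP => w; rewrite in_set => exw; rewrite in_setU1.
    case wD: (w \in D); first by rewrite (eqP (implyP (uniqd w wD) exw)) eqxx.
    case wnb: (w \in nb D); last by rewrite /Q in_set exw /N1c in_setU wD wnb orbT.
    have := noN1 w; rewrite /N1 in_setD wD wnb exw /=.
    by move=> /(_ isT).
  apply: leq_trans (subset_leq_card sub) _.
  by rewrite cardsU1 -add1n leq_add2r leq_b1.
have disj : forall w, w \in P -> w \in Q -> False.
  by move=> w /(subsetP PD) wN; rewrite inE wN andbF.
have cardD' : #|x |: D| = #|D| + 1 by rewrite cardsU1 xD addnC.
exists (x |: D), cc, (P :|: Q); split; last by rewrite cardD' addn1.
split=> //.
- by apply/set0Pn; exists x; rewrite !inE eqxx.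
- rewrite subUset; apply/andP; split.
    apply: subset_trans PD _; apply: N1c_mono.
    by apply/subsetP => w wD; rewrite !inE wD !orbT.
  apply/subsetP => w; rewrite inE => /andP[exw _].
  rewrite /N1c in_setU; apply/orP; right; apply/nbP; exists x; last by rewrite esym.
  by rewrite !inE eqxx.
- rewrite (cardU_disj disj) cardD'; clear -Hineq cardQ d2; nia.
Qed.

Lemma construct_gen n : forall (D : {set T}) (c : T -> T -> nat) (P : {set T}), #|T| - #|D| <= n -> good D c P ->
  exists D' c' P', good D' c' P' /\ Fin D'.
Proof.
elim: n => [|n IH] D c P Hn Hg.
  have DT : D = setT.
    by apply/eqP; rewrite eqEcard subsetT cardsT; move: Hn; rewrite leqn0 subn_eq0.
  exists D, c, P; split=> //; split.
    by move=> v; rewrite /N2c /N1c DT !inE.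
  by move=> x; rewrite /N1 DT in_setD in_setT.
case: (boolP [exists v, v \notin N2c D]) => [/existsP [v vN]|noA].
  have [D' [c' [P' [Hg' lt]]]] := stepA Hg vN.
  apply: (IH D' c' P') => //.
  move: Hn; have := max_card (mem D'); rewrite cardT => HT; lia.
case: (boolP [exists x, lonely D x]) => [/existsP [x lx]|noB].
  have [D' [c' [P' [Hg' lt]]]] := stepB Hg lx.
  apply: (IH D' c' P') => //.
  move: Hn; have := max_card (mem D'); rewrite cardT => HT; lia.
exists D, c, P; split=> //; split.
  by move=> v; move: noA => /existsPn /(_ v); rewrite negbK.
move=> x xN1 un; case: (boolP [exists y in N1 D, e x y]) => [/exists_inP [y yN exy]|H].
  by exists y.
move: noB => /existsPn /(_ x); rewrite /lonely xN1 H andbT /=.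
move/negP; case; apply/forall_inP => d dD; apply/implyP => exd; apply/eqP; exact: un.
Qed.

End Constr.

Section MaxCut.
Variables (T : finType) (e : rel T).
Hypothesis esym : symmetric e.
Hypothesis eirr : irreflexive e.

Definition cutset (X : {set T}) (f : {ffun T -> bool}) :=
  [set p : T * T | [&& p.1 \in X, p.2 \in X, e p.1 p.2 & f p.1 != f p.2]].

Lemma maxcut (X : {set T}) (needy : pred T) :
  (forall x, needy x -> exists2 y, y \in X & e x y) ->
  exists s : T -> bool, forall x, needy x -> x \in X ->
    exists2 y, y \in X & e x y /\ s y != s x.
Proof.
move=> Hn.
pose cut f := #|cutset X f|.
case: (@arg_maxnP _ [ffun=> false] predT cut isT) => f _ fmax.
exists f => x nx xX.
case: (boolP [exists y in X, e x y && (f y != f x)]) => [/exists_inP [y yX /andP[exy fy]]|H].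
  by exists y.
exfalso.
have [y0 y0X exy0] := Hn x nx.
pose g : {ffun T -> bool} := [ffun y => if y == x then ~~ f x else f y].
have gE : forall y, g y = if y == x then ~~ f x else f y.
  by move=> y; rewrite /g ffunE.
have : cut f < cut g.
  apply: proper_card; apply/properP; split.
    apply/subsetP => [[a b]]; rewrite !inE /= => /and4P[aX bX eab fab].
    rewrite aX bX eab /= !gE.
    case: (eqVneq a x) => [ax|ax].
      move: H => /exists_inPn /(_ b bX); rewrite -ax eab /= => /negP; case.
      by rewrite eq_sym.
    case: (eqVneq b x) => [bx|bx] //.
    move: H => /exists_inPn /(_ a aX); rewrite -bx esym eab /= => /negP; case.
    by [].
  have y0x : (y0 == x) = false.
    by apply/negbTE; apply: contraTneq exy0 => ->; rewrite eirr.
  have fy0 : f y0 = f x.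
    by move: H => /exists_inPn /(_ y0 y0X); rewrite exy0 /= negbK => /eqP.
  exists (x, y0).
    by rewrite inE /= xX y0X exy0 /= !gE eqxx y0x fy0; case: (f x).
  by rewrite inE /= fy0 eqxx !andbF.
by move=> lt; have := leq_ltn_trans (fmax g isT) lt; rewrite ltnn.
Qed.

End MaxCut.

Section Final.
Variables (T : finType) (e : rel T).
Hypothesis esym : symmetric e.
Hypothesis eirr : irreflexive e.
Variables (D N1s : {set T}) (c : T -> T -> nat) (k : nat) (d0f : T -> T).
Hypothesis HD : Dconn e D c k.
Hypothesis N1s_def : forall x, x \in N1s = (x \notin D) && [exists d in D, e x d].
Hypothesis d0P : forall x, x \in N1s -> d0f x \in D /\ e x (d0f x).
Hypothesis nolonely : forall x, x \in N1s ->
  (forall d, d \in D -> e x d -> d = d0f x) -> exists2 y, y \in N1s & e x y.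
Hypothesis reach2 : forall u, u \notin D -> u \notin N1s -> exists2 w, w \in N1s & e u w.
Hypothesis deg2 : forall x, 2 <= deg e x.

Definition N2s := ~: (D :|: N1s).

Lemma N1sD x : x \in N1s -> x \notin D.
Proof. by rewrite N1s_def => /andP[]. Qed.

Lemma N2sP u : u \in N2s -> u \notin D /\ u \notin N1s.
Proof. by rewrite !inE negb_or => /andP[]. Qed.

Definition w0f u := odflt u [pick w in N1s | e u w].

Lemma w0P u : u \in N2s -> w0f u \in N1s /\ e u (w0f u).
Proof.
move=> /N2sP [uD uN]; have [w wN euw] := reach2 uD uN.
rewrite /w0f; case: pickP => [w' /andP[]|] //= /(_ w).
by rewrite wN euw.
Qed.

Definition needy1 x := (x \in N1s) && [forall d in D, e x d ==> (d == d0f x)].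
Definition needy2 u := (u \in N2s) && [forall w in N1s, e u w ==> (w == w0f u)].

Lemma needy1_nb x : needy1 x -> exists2 y, y \in N1s & e x y.
Proof.
move=> /andP[xN /forall_inP H]; apply: nolonely => // d dD exd.
by apply/eqP; exact: (implyP (H d dD) exd).
Qed.

Lemma needy2_nb u : needy2 u -> exists2 y, y \in N2s & e u y.
Proof.
move=> /andP[uN2 /forall_inP H].
have [uD uN] := N2sP uN2.
have := deg2 u; rewrite /deg (cardsD1 (w0f u)).
set A := _ :\ _ => HA.
have : 0 < #|A| by move: HA; case: (_ \in _) => /=; lia.
move=> /card_gt0P [y]; rewrite !inE => /andP[yw euy].
exists y => //; rewrite !inE negb_or; apply/andP; split.
  apply: contra uD => yD; move: uN; rewrite N1s_def negb_and negbK.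
  case/orP => // /exists_inPn /(_ y yD); rewrite euy.
  by [].
apply/negP => yN; have := implyP (H y yN) euy; by rewrite (negbTE yw).
Qed.

Variables (tau sig : T -> bool).
Hypothesis tauP : forall x, needy1 x -> x \in N1s ->
  exists2 y, y \in N1s & e x y /\ tau y != tau x.
Hypothesis sigP : forall u, needy2 u -> u \in N2s ->
  exists2 y, y \in N2s & e u y /\ sig y != sig u.

Definition Acl (b : bool) := k + b.
Definition Fcl := k + 2.
Definition Bcl (b : bool) := k + 3 + b.
Definition Gcl := k + 5.

Definition Acol x d := Acl (if d == d0f x then tau x else ~~ tau x).
Definition Bcol u w := Bcl (if w == w0f u then sig u else ~~ sig u).

Definition C x y :=
  if x \in D then (if y \in D then c x y else if y \in N1s then Acol y x else Gcl)
  else if x \in N1s then (if y \in D then Acol x y else if y \in N1s then Fcl else Bcol y x)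
  else (if y \in D then Gcl else if y \in N1s then Bcol x y else Gcl).

Lemma Csym x y : C x y = C y x.
Proof.
have [cs _ _] := HD.
rewrite /C; case: (x \in D); case: (y \in D); case: (x \in N1s); case: (y \in N1s) => //; exact: cs.
Qed.

Lemma CD x y : x \in D -> y \in D -> C x y = c x y.
Proof. by rewrite /C => -> ->. Qed.

Lemma CA x d : x \in N1s -> d \in D -> C x d = Acol x d.
Proof. by move=> xN dD; rewrite /C (negbTE (N1sD xN)) xN dD. Qed.

Lemma CF x y : x \in N1s -> y \in N1s -> C x y = Fcl.
Proof. by move=> xN yN; rewrite /C (negbTE (N1sD xN)) xN (negbTE (N1sD yN)) yN. Qed.

Lemma CB u w : u \in N2s -> w \in N1s -> C u w = Bcol u w.
Proof.
move=> /N2sP [uD uN] wN.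
by rewrite /C (negbTE uD) (negbTE uN) (negbTE (N1sD wN)) wN.
Qed.

Lemma CG u v : u \in N2s -> v \in N2s -> C u v = Gcl.
Proof.
move=> /N2sP [uD uN] /N2sP [vD vN].
by rewrite /C (negbTE uD) (negbTE uN) (negbTE vD) (negbTE vN).
Qed.

Lemma Cbound x y : e x y -> C x y < k + 6.
Proof.
have [_ cb _] := HD => exy.
rewrite /C.
case xD: (x \in D); case yD: (y \in D).
  by rewrite ltn_addr // cb.
all: have hA : forall b, Acl b < k + 6 by case; rewrite /Acl /=; lia.
all: have hB : forall b, Bcl b < k + 6 by case; rewrite /Bcl /=; lia.
all: have hF : Fcl < k + 6 by rewrite /Fcl; lia.
all: have hG : Gcl < k + 6 by rewrite /Gcl; lia.
all: by repeat case: ifP => _; rewrite /Acol /Bcol ?hA ?hB ?hF ?hG.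
Qed.

Definition route u (S : pred nat) := exists r,
  [/\ path e u r, last u r \in D, uniq (pairmap C u r) & all S (pairmap C u r)].

Lemma R0 d S : d \in D -> route d S.
Proof. by move=> dD; exists [::]. Qed.

Lemma Rmono u (S S' : pred nat) : route u S -> (forall i, S i -> S' i) -> route u S'.
Proof.
move=> [r [pr lr ur ar]] H; exists r; split=> //.
by apply/allP => i /(allP ar) /H.
Qed.

Lemma Rext u w (S : pred nat) col : route w S -> e u w -> C u w = col -> ~~ S col ->
  route u (fun i => (i == col) || S i).
Proof.
move=> [r [pr lr ur ar]] euw Cuw nS; exists (w :: r); split=> /=.
- by rewrite euw.
- by [].
- rewrite ur andbT Cuw; apply: contra nS => /(allP ar); done.
- rewrite Cuw eqxx /=; apply/allP => i /(allP ar) ->; rewrite orbT; done.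
Qed.


Lemma AF a : Fcl != Acl a. Proof. by case: a; rewrite /Fcl /Acl /=; lia. Qed.
Lemma AB a b : Bcl b != Acl a. Proof. by case: a; case: b; rewrite /Bcl /Acl /=; lia. Qed.
Lemma FB b : Bcl b != Fcl. Proof. by case: b; rewrite /Bcl /Fcl /=; lia. Qed.
Lemma AG a : Gcl != Acl a. Proof. by case: a; rewrite /Gcl /Acl /=; lia. Qed.
Lemma BG b : Gcl != Bcl b. Proof. by case: b; rewrite /Gcl /Bcl /=; lia. Qed.
Lemma FG : Gcl != Fcl. Proof. by rewrite /Gcl /Fcl /=; lia. Qed.

Lemma bool3 (x y a : bool) : x != y -> y != a -> x = a.
Proof. by case: x; case: y; case: a. Qed.

Lemma N1_direct y : y \in N1s -> route y (fun i => i == Acl (tau y)).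
Proof.
move=> yN; have [dyD eyd] := d0P yN.
have Cyd : C y (d0f y) = Acl (tau y) by rewrite CA // /Acol eqxx.
apply: Rmono (Rext (R0 pred0 dyD) eyd Cyd _) _ => //.
by move=> i; rewrite orbF.
Qed.

Lemma N1_flex x a : x \in N1s -> route x (fun i => (i == Acl a) || (i == Fcl)).
Proof.
move=> xN.
case: (eqVneq (tau x) a) => [tx|tx].
  by apply: Rmono (N1_direct xN) _ => i; rewrite tx => ->.
case: (boolP [exists d in D, e x d && (d != d0f x)]) =>
    [/exists_inP [d dD /andP [exd dn]]|H].
  have Cxd : C x d = Acl a.
    by rewrite CA // /Acol (negbTE dn); case: (tau x) tx; case: a.
  apply: Rmono (Rext (R0 pred0 dD) exd Cxd _) _ => //.
  by move=> i; rewrite orbF => ->.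
have nx : needy1 x.
  rewrite /needy1 xN; apply/forall_inP => d dD; apply/implyP => exd.
  by move: H => /exists_inPn /(_ d dD); rewrite exd /= negbK.
have [y yN [exy ty]] := tauP nx xN.
have ty' : tau y = a := bool3 ty tx.
apply: Rmono (Rext (N1_direct yN) exy (CF xN yN) _) _.
  by rewrite ty' AF.
by move=> i /orP[->|]; rewrite ?orbT // ty' => ->.
Qed.

Lemma getB u b : u \in N2s -> ~~ needy2 u \/ sig u = b ->
  exists2 w, w \in N1s & e u w /\ C u w = Bcl b.
Proof.
move=> uN H; have [wN euw] := w0P uN.
case: (eqVneq (sig u) b) => [sb|sb].
  apply: (ex_intro2 _ _ (w0f u) wN); split=> //.
  by rewrite CB // /Bcol eqxx sb.
case: H => [nn|]; last by move=> sb'; rewrite sb' eqxx in sb.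
move: nn; rewrite /needy2 uN /= => /forall_inPn [w wN'].
rewrite negb_imply => /andP[euw' wn].
exists w => //; split=> //; rewrite CB // /Bcol (negbTE wn).
by case: (sig u) sb; case: b.
Qed.

Lemma viaB u w a b : w \in N1s -> e u w -> C u w = Bcl b ->
  route u (fun i => [|| i == Acl a, i == Fcl | i == Bcl b]).
Proof.
move=> wN euw Cuw.
apply: Rmono (Rext (N1_flex a wN) euw Cuw _) _.
  by rewrite negb_or AB FB.
by move=> i /orP[->|/orP[]->]; rewrite ?orbT.
Qed.

Lemma N2_flex u a b : u \in N2s ->
  route u (fun i => [|| i == Acl a, i == Fcl, i == Bcl b | i == Gcl]).
Proof.
move=> uN.
have fin : forall v, v \in N2s -> ~~ needy2 v \/ sig v = b ->
    route v (fun i => [|| i == Acl a, i == Fcl, i == Bcl b | i == Gcl]).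
  move=> v vN H; have [w wN [evw Cvw]] := getB vN H.
  by apply: Rmono (viaB a wN evw Cvw) _ => i /or3P[]->; rewrite ?orbT.
case: (boolP (needy2 u)) => [nu|nu]; last by apply: fin => //; left.
case: (eqVneq (sig u) b) => [sb|sb]; first by apply: fin => //; right.
have [u' u'N [euu' su']] := sigP nu uN.
have su'b : sig u' = b := bool3 su' sb.
have [w wN [eu'w Cu'w]] := getB u'N (or_intror su'b).
apply: Rmono (Rext (viaB a wN eu'w Cu'w) euu' (CG uN u'N) _) _.
  by rewrite !negb_or AG FG BG.
by move=> i /orP[->|/or3P[]->]; rewrite ?orbT.
Qed.

Definition alpha v := if v \in N1s then tau v else tau (w0f v).

Lemma direct v : route v (fun i => (i == Acl (alpha v)) || (i == Bcl (sig v))).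
Proof.
case vD: (v \in D); first exact: R0.
case vN: (v \in N1s).
  by apply: Rmono (N1_direct vN) _ => i; rewrite /alpha vN => ->.
have v2 : v \in N2s by rewrite !inE vD vN.
have [wN evw] := w0P v2.
have Cvw : C v (w0f v) = Bcl (sig v) by rewrite CB // /Bcol eqxx.
apply: Rmono (Rext (N1_direct wN) evw Cvw _) _.
  by rewrite AB.
by move=> i; rewrite /alpha vN => /orP[->|->]; rewrite ?orbT.
Qed.

Lemma flex u a b :
  route u (fun i => [|| i == Acl a, i == Fcl, i == Bcl b | i == Gcl]).
Proof.
case uD: (u \in D); first exact: R0.
case uN: (u \in N1s).
  by apply: Rmono (N1_flex a uN) _ => i /orP[]->; rewrite ?orbT.
by apply: N2_flex; rewrite !inE uD uN.
Qed.


Lemma combine u v (S1 S2 : pred nat) : route u S1 -> route v S2 ->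
  (forall i, S1 i -> S2 i -> False) -> (forall i, S1 i -> k <= i) ->
  (forall i, S2 i -> k <= i) -> u != v -> exists p, rainbow_path e C u v p.
Proof.
move=> [r1 [p1 l1 u1 a1]] [r2 [p2 l2 u2 a2]] dis k1 k2 uv.
have [q [pq lq qc qu]] : exists q, [/\ path e (last u r1) q, last (last u r1) q = last v r2,
    all (fun i => i < k) (pairmap C (last u r1) q) & uniq (pairmap C (last u r1) q)].
  case: (eqVneq (last u r1) (last v r2)) => [<-|ne]; first by exists [::].
  have [cs cb cc] := HD.
  have [q [/and4P[pq uq lq uc] qD]] := cc _ _ l1 l2 ne.
  have ag : forall a b, a \in D -> b \in D -> C a b = c a b by move=> a b; exact: CD.
  exists q; rewrite (pairmap_agree ag) // uc (eqP lq); split=> //.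
  exact: (pairmap_bound cb).
pose W := r1 ++ q ++ rev (belast v r2).
have pW : path e u W.
  rewrite /W cat_path p1 /= cat_path pq /= lq.
  exact: rev_walk_path.
have lW : last u W = v by rewrite /W !last_cat lq rev_walk_last.
have uW : uniq (pairmap C u W).
  rewrite /W !pairmap_cat lq rev_walk_pairmap; last exact: Csym.
  rewrite cat_uniq u1 /= cat_uniq qu rev_uniq u2 andbT has_cat has_rev negb_or.
  rewrite has_rev; apply/and3P; split=> //; first (apply/andP; split).
  - apply/hasPn => i iq; apply/negP => i1.
    have h1 := allP qc i iq; have h2 := k1 i (allP a1 i i1).
    by rewrite /= ltnNge h2 in h1.
  - apply/hasPn => i i2; apply/negP => i1.
    exact: dis (allP a1 i i1) (allP a2 i i2).
  - apply/hasPn => i i2; apply/negP => iq.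
    have h1 := allP qc i iq; have h2 := k2 i (allP a2 i i2).
    by rewrite /= ltnNge h2 in h1.
have [p [rp _]] := walk_to_path pW lW uv uW.
by exists p.
Qed.

Lemma disj_cols a b i : [|| i == Acl (~~ a), i == Fcl, i == Bcl (~~ b) | i == Gcl] ->
  (i == Acl a) || (i == Bcl b) -> False.
Proof.
by case: a; case: b; rewrite /Acl /Fcl /Bcl /Gcl /= => /or4P[]/eqP-> /orP[]/eqP; lia.
Qed.

Lemma final_colouring : edge_colouring e (k + 6) C /\ rainbow_connected e C.
Proof.
split.
  by move=> x y exy; split; [exact: Csym | exact: Cbound].
move=> u v uv.
apply: (combine (flex u (~~ alpha v) (~~ sig v)) (direct v)) => //.
- by move=> i; apply: disj_cols.
- move=> i; rewrite /Acl /Fcl /Bcl /Gcl => /or4P[]/eqP->; lia.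
- move=> i; rewrite /Acl /Bcl => /orP[]/eqP->; lia.
Qed.

End Final.

Lemma construct (T : finType) (e : rel T) delta :
  symmetric e -> irreflexive e -> (forall x, delta <= deg e x) -> 1 < delta ->
  connected_graph e -> forall s : T,
  exists D c P, good e delta D c P /\ Fin e D.
Proof.
move=> esym eirr degd d2 conn s.
pose P := s |: [set y | e s y].
have g0 : good e delta [set s] (fun _ _ => 0) P.
  split.
  - split=> //.
    + by move=> x y; rewrite !inE => /eqP -> /eqP ->; rewrite eirr.
    + by move=> x y; rewrite !inE => /eqP -> /eqP ->; rewrite eqxx.
  - by apply/set0Pn; exists s; rewrite inE.
  - apply/subsetP => y; rewrite in_setU1 in_set => /predU1P[->|esy].
      by rewrite /N1c in_setU in_set1 eqxx.
    rewrite /N1c in_setU; apply/orP; right; apply/nbP; exists s; first by rewrite in_set1.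
    by rewrite esym.
  - rewrite cards1 cardsU1 inE eirr /= add1n.
    have := degd s; rewrite /deg => H; lia.
exact: (construct_gen esym eirr degd d2 conn (leqnn _) g0).
Qed.

Lemma prc_ge (T : finType) (e : rel T) k c x :
  edge_colouring e k c -> proper_colouring e c -> deg e x <= k.
Proof.
move=> ec pc.
pose L := enum [set y | e x y].
have uL : uniq (map (c x) L).
  rewrite map_inj_in_uniq ?enum_uniq // => a b.
  rewrite !mem_enum !inE => exa exb cab.
  apply/eqP; apply: contraT => ab.
  by move: (pc x a b exa exb ab); rewrite cab eqxx.
have sub : {subset map (c x) L <= iota 0 k}.
  move=> i /mapP [a]; rewrite mem_enum inE => exa ->.
  by rewrite mem_iota add0n; have [_ ->] := ec x a exa.
have := uniq_leq_size uL sub; rewrite size_map size_iota /deg cardE //.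
Qed.

Lemma rc_bound (T : finType) (e : rel T) delta rc (s : T) :
  simple_graph e -> connected_graph e -> (forall x, delta <= deg e x) -> 1 < delta ->
  is_rc e rc -> rc * delta.+1 <= 3 * #|T| + 3 * delta.+1.
Proof.
move=> [esym eirr] conn degd d2 [_ rcmin].
have [D [c [P [[HD D0 PD Hineq] [F1 F2]]]]] := construct esym eirr degd d2 conn s.
have N1s_def : forall x, (x \in N1 e D) = (x \notin D) && [exists d in D, e x d].
  by move=> x; rewrite /N1 in_setD /nb in_set.
have d0P' : forall x, x \in N1 e D -> d0 e D x \in D /\ e x (d0 e D x).
  by move=> x; rewrite /N1 in_setD => /andP[_ /d0P].
have reach2 : forall u, u \notin D -> u \notin N1 e D -> exists2 w, w \in N1 e D & e u w.
  move=> u uD uN.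
  have unb : u \notin nb e D by move: uN; rewrite /N1 in_setD uD.
  have := F1 u; rewrite /N2c in_setU /N1c in_setU (negbTE uD) (negbTE unb) /=.
  move=> /nbP [w]; rewrite in_setU => /orP[wD|wnb] euw.
    by move: unb; rewrite /nb in_set; move/exists_inPn/(_ w wD); rewrite euw.
  exists w => //; rewrite /N1 in_setD wnb andbT.
  by apply: contra unb => wD; apply/nbP; exists w.
have deg2 : forall x, 1 < deg e x by move=> x; apply: leq_trans d2 (degd x).
have [tau tauP] := maxcut esym eirr (needy1_nb F2).
have [sig sigP] := maxcut esym eirr (needy2_nb N1s_def deg2).
have [ec rcn] := final_colouring esym HD N1s_def d0P' reach2 tauP sigP.
have := rcmin _ (ex_intro _ _ (conj ec rcn)).
have PT : #|P| <= #|T| by apply: max_card.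
have Dpos : 0 < #|D| by rewrite card_gt0.
move=> H; have H' : rc <= #|D| + 5 by move: H; lia.
clear -H' Hineq PT; nia.
Qed.

Local Open Scope ring_scope.

Theorem theorem3p3 (R : rcfType) (T : finType) (e : rel T) (delta rc prc : nat) :
  simple_graph e -> connected_graph e ->
  is_min_degree e delta ->
  1 + Num.sqrt (3 * (#|T|%:R) + 4 : R) <= delta%:R ->
  is_rc e rc -> is_prc e prc ->
  prc%:R - rc%:R >= delta%:R - (3 * (#|T|%:R) / (delta%:R + 1) + 3) :> R.
Proof.
move=> sg conn [degd [s degs]] hsq hrc [[c [ec pc _]] _].
have d2 : (1 < delta)%N.
  set n := #|T|%:R : R in hsq.
  have n0 : 0 <= n by rewrite /n ler0n.
  set q := Num.sqrt (3 * n + 4) in hsq.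
  have q0 : 0 <= q by apply: sqrtr_ge0.
  have qq : q ^+ 2 = 3 * n + 4 by rewrite sqr_sqrtr //; lra.
  have : (1 : R) < delta%:R by nra.
  by rewrite ltr1n.
have Hrc := rc_bound s sg conn degd d2 hrc.
have Hprc : (delta <= prc)%N by rewrite -degs; exact: prc_ge ec pc.
have Hp : (delta%:R : R) <= prc%:R by rewrite ler_nat.
have Hr : (rc%:R : R) * (delta%:R + 1) <= 3 * #|T|%:R + 3 * (delta%:R + 1).
  have := Hrc; rewrite -(ler_nat R) !natrD !natrM -addn1 natrD /=.
  lra.
set n := #|T|%:R : R in Hr *.
set d := (delta%:R : R) in Hp Hr *.
have d0 : 0 < d + 1 by rewrite /d; have := ler0n R delta; lra.
have X : 3 * n / (d + 1) * (d + 1) = 3 * n by rewrite mulfVK // gt_eqF.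
set x := 3 * n / (d + 1) in X *.
nra.
Qed.
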